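(* Let $\mathcal A$ be a finite alphabet and let $\Psi$ be a symmetry on $\mathcal A^*$. Then $\Psi$ is either a morphism or an antimorphism.
   Context: A symmetry on $\mathcal A^*$ is a map $\Psi:\mathcal A^*\to\mathcal A^*$ such that (1) $\Psi$ is a bijection and (2) for all $w,v\in\mathcal A^*$, the number of occurrences of $w$ in $v$ equals the number of occurrences of $\Psi(w)$ in $\Psi(v)$ (an occurrence of $w$ in $v=v_1\cdots v_m$ is an index $i$ such that $w$ is a prefix of $v_iv_{i+1}\cdots v_m$). $\Psi$ is a morphism if $\Psi(vw)=\Psi(v)\Psi(w)$ and an antimorphism if $\Psi(vw)=\Psi(w)\Psi(v)$ for all $v,w\in\mathcal A^*$. *)

(* Defs.v *)
From mathcomp Require Import all_boot.
Set Implicit Arguments. Unset Strict Implicit. Unset Printing Implicit Defensive.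

(* Words over A are sequences [seq A]. An occurrence of w in v = v_1...v_m is an
   index i (1 <= i <= m; here 0-based, i < size v) such that w is a prefix of
   v_i v_{i+1} ... v_m. *)
Definition occ (A : eqType) (w v : seq A) : nat :=
  count (fun i => prefix w (drop i v)) (iota 0 (size v)).

Definition symmetry (A : eqType) (Psi : seq A -> seq A) : Prop :=
  bijective Psi /\ forall w v : seq A, occ w v = occ (Psi w) (Psi v).

Definition morphism (A : eqType) (Psi : seq A -> seq A) : Prop :=
  forall v w : seq A, Psi (v ++ w) = Psi v ++ Psi w.

Definition antimorphism (A : eqType) (Psi : seq A -> seq A) : Prop :=
  forall v w : seq A, Psi (v ++ w) = Psi w ++ Psi v.

(* Main.v *)
Require Import Defs.
From mathcomp Require Import all_boot.
From mathcomp Require Import zify.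
Set Implicit Arguments. Unset Strict Implicit. Unset Printing Implicit Defensive.

Section S.
Variable A : eqType.
Implicit Types w v u : seq A.

Lemma occ_nil w : occ w [::] = 0.
Proof. by []. Qed.

Lemma occ_cons w x v : occ w (x :: v) = prefix w (x :: v) + occ w v.
Proof.
by rewrite /occ /= -add1n iotaDl count_map; congr (_ + _).
Qed.

Lemma occ_pos w v i : i < size v -> prefix w (drop i v) -> 0 < occ w v.
Proof.
move=> Hi Hp; rewrite /occ -has_count; apply/hasP; exists i => //.
by rewrite mem_iota.
Qed.

Lemma occ_posE w v : 0 < occ w v -> exists2 i, i < size v & prefix w (drop i v).
Proof.
rewrite /occ -has_count => /hasP [i]; rewrite mem_iota add0n => Hi Hp.
by exists i.
Qed.

Lemma prefix_size w v : prefix w v -> size w <= size v.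
Proof. by move/prefixP => [s ->]; rewrite size_cat leq_addr. Qed.

Lemma prefix_eq w v : prefix w v -> size w = size v -> w = v.
Proof.
move/prefixP => [s ->]; rewrite size_cat => /eqP.
rewrite -{1}[size w]addn0 eqn_add2l eq_sym size_eq0 => /eqP ->.
by rewrite cats0.
Qed.

Lemma occ_self w : w != [::] -> occ w w = 1.
Proof.
case: w => // x w _; rewrite occ_cons prefix_refl.
case H: (occ (x :: w) w) => //.
have [i Hi /prefix_size] : exists2 i, i < size w & prefix (x :: w) (drop i w).
  by apply: occ_posE; rewrite H.
by rewrite size_drop /= ltnNge leq_subr.
Qed.

Lemma occ0 v : occ [::] v = size v.
Proof. by rewrite /occ (eq_count (a2 := predT)) ?count_predT ?size_iota // => i; case: drop. Qed.

Lemma occ0s w : occ w [::] = 0.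
Proof. by []. Qed.

Lemma occ_win u w n : size u = n -> size w = n.+1 -> 0 < occ u w ->
  u = take n w \/ u = drop 1 w.
Proof.
move=> Hu Hw /occ_posE [i Hi Hp].
have := prefix_size Hp; rewrite size_drop Hu Hw => Hle.
have : i <= 1 by rewrite Hw in Hi; lia.
case: i Hi Hp {Hle} => [|[|//]] _ Hp.
  by left; move: Hp; rewrite drop0 prefixE Hu => /eqP.
by right; apply: (prefix_eq Hp); rewrite size_drop Hu Hw subn1.
Qed.

Lemma occ_take w n : 0 < size w -> 0 < occ (take n w) w.
Proof.
move=> H; apply: (occ_pos H); rewrite drop0.
by rewrite -{2}(cat_take_drop n w) prefix_prefix.
Qed.

Lemma occ_drop1 w : 1 < size w -> 0 < occ (drop 1 w) w.
Proof. by move=> H; apply: (occ_pos H); rewrite prefix_refl. Qed.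

Lemma nth_take_d (c : A) n u i :
  nth c (take n u) i = if i < n then nth c u i else c.
Proof.
case: ifP => H; first by rewrite nth_take.
by rewrite nth_default // size_take_min geq_min leqNgt H.
Qed.

Lemma const_lemma (c : A) n w : size w = n.+1 -> w = c :: take n (c :: take n w) ->
  c :: take n w = w.
Proof.
move=> Hs H.
have Hn : forall i, nth c w i = c /\ nth c w i.+1 = c.
  elim=> [|i [IH1 IH2]].
    by rewrite {1 2}H /= nth_take_d; case: ifP.
  split=> //; rewrite {1}H /= nth_take_d; case: ifP => // _ /=.
  by rewrite nth_take_d IH1; case: ifP.
apply: (@eq_from_nth _ c); first by rewrite /= size_take Hs ltnSn.
move=> [|i] _ /=; first by rewrite (Hn 0).1.
by rewrite nth_take_d (Hn i).1 (Hn i).2; case: ifP.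
Qed.

Lemma core_lemma (f : A -> A) n x0 w Y : injective f -> size w = n.+1 ->
  Y = f x0 :: drop 1 Y ->
  (take n.+1 Y = map f (take n.+1 (x0 :: w)) /\ drop 1 Y = map f w) \/
  (take n.+1 Y = map f w /\ drop 1 Y = map f (take n.+1 (x0 :: w))) ->
  Y = map f (x0 :: w).
Proof.
move=> finj Hw HY [[_ E]|[E1 E2]]; first by rewrite HY E.
rewrite HY E2 /=; rewrite HY E2 /= in E1.
have /(inj_map finj) E3 : map f w = map f (x0 :: take n (x0 :: take n w)).
  by rewrite -E1 /= [in RHS]map_take.
by rewrite -[in RHS](const_lemma Hw E3).
Qed.

End S.

Section Sym.
Variable A : finType.
Variable Psi : seq A -> seq A.
Hypothesis HS : symmetry Psi.

Lemma Psi_occ w v : occ w v = occ (Psi w) (Psi v).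
Proof. exact: HS.2. Qed.

Lemma Psi_nil : Psi [::] = [::].
Proof.
case E: (Psi [::] == [::]); first exact/eqP.
have := Psi_occ [::] [::]; rewrite [RHS]occ_self ?E //.
Qed.

Lemma size_Psi v : size (Psi v) = size v.
Proof. by rewrite -(occ0 (Psi v)) -(occ0 v) (Psi_occ [::] v) Psi_nil. Qed.

Definition sig (a : A) := head a (Psi [:: a]).

Lemma Psi1 a : Psi [:: a] = [:: sig a].
Proof.
rewrite /sig; have := size_Psi [:: a].
by case: (Psi [:: a]) => [|x [|]].
Qed.

Lemma Psi_inj : injective Psi.
Proof. by have [g H1 _] := HS.1; exact: can_inj H1. Qed.

Lemma sig_inj : injective sig.
Proof. by move=> a b E; have := Psi1 a; rewrite E -Psi1 => /Psi_inj [->]. Qed.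

Lemma pair_lemma n v : size v = n.+2 ->
  let y := Psi v in
  (take n.+1 y = Psi (take n.+1 v) /\ drop 1 y = Psi (drop 1 v)) \/
  (take n.+1 y = Psi (drop 1 v) /\ drop 1 y = Psi (take n.+1 v)).
Proof.
move=> Hv y.
have Hy : size y = n.+2 by rewrite size_Psi.
have [g _ Hg] := HS.1.
have img : forall x, size x = n.+1 -> 0 < occ x v ->
    Psi x = take n.+1 y \/ Psi x = drop 1 y.
  move=> x Hx Ho; apply: (occ_win (n:=n.+1)) => //; first by rewrite size_Psi.
  by rewrite -Psi_occ.
have pre : forall z, size z = n.+1 -> 0 < occ z y ->
    z = Psi (take n.+1 v) \/ z = Psi (drop 1 v).
  move=> z Hz Ho; rewrite -(Hg z).
  have Hgz : size (g z) = n.+1 by rewrite -size_Psi Hg.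
  have := @occ_win _ (g z) v n.+1 Hgz Hv.
  by rewrite Psi_occ Hg => /(_ Ho) [E|E]; [left|right]; rewrite -E Hg.
have sP : size (take n.+1 y) = n.+1 by rewrite size_take Hy ltnSn.
have sS : size (drop 1 y) = n.+1 by rewrite size_drop Hy subn1.
have sp : size (take n.+1 v) = n.+1 by rewrite size_take Hv ltnSn.
have ss : size (drop 1 v) = n.+1 by rewrite size_drop Hv subn1.
have y0 : 0 < size y by rewrite Hy.
have y1 : 1 < size y by rewrite Hy.
have v0 : 0 < size v by rewrite Hv.
have v1 : 1 < size v by rewrite Hv.
have [EP|EP] := pre _ sP (@occ_take _ y n.+1 y0);
have [ES|ES] := pre _ sS (@occ_drop1 _ y y1).
- left; split => //; rewrite ES.
  by case: (img _ ss (@occ_drop1 _ v v1)) => E; rewrite E ?EP ?ES.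
- by left.
- by right.
- left; split => //; rewrite EP.
  by case: (img _ sp (@occ_take _ v n.+1 v0)) => E; rewrite E ?EP ?ES.
Qed.

End Sym.

Section Letters.
Variable A : finType.

Definition hd_is (c : A) (v : seq A) : nat := if v is x :: _ then (x == c) else 0.

Lemma sum_pred1 (x : A) (F : A -> nat) :
  (forall d, d != x -> F d = 0) -> \sum_(d : A) F d = F x.
Proof.
move=> H; rewrite (bigD1 x) //= big1 ?addn0 // => d /H.
Qed.

Lemma pref_sum c s x (v : seq A) :
  \sum_(d : A) prefix [:: d, c & s] (x :: v) = prefix (c :: s) v.
Proof.
rewrite (@sum_pred1 x) /= ?eqxx // => d H.
by rewrite (negbTE H).
Qed.

Lemma pref_sum2 c x (v : seq A) :
  \sum_(d : A) prefix [:: c; d] (x :: v) = (c == x) && (v != [::]).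
Proof.
case: v => [|y v].
  by rewrite big1 ?andbF // => d _ /=; rewrite andbF.
rewrite (@sum_pred1 y) /= ?eqxx ?andbT //; last by move=> d H; rewrite (negbTE H) andbF.
by rewrite prefix0s !andbT.
Qed.

Lemma occ1 c (v : seq A) : occ [:: c] v = hd_is c v + \sum_(d : A) occ [:: d; c] v.
Proof.
elim: v => [|x v IH]; first by rewrite big1.
rewrite occ_cons (eq_bigr (fun d => prefix [:: d; c] (x :: v) + occ [:: d; c] v));
  last by move=> d _; rewrite occ_cons.
rewrite big_split pref_sum IH /= prefix0s andbT eq_sym; congr (_ + (_ + _)).
by case: v {IH} => [|y v] //=; rewrite prefix0s andbT eq_sym.
Qed.

Lemma occ1r c (v : seq A) : occ [:: c] v = hd_is c (rev v) + \sum_(d : A) occ [:: c; d] v.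
Proof.
elim: v => [|x v IH]; first by rewrite big1.
rewrite occ_cons (eq_bigr (fun d => prefix [:: c; d] (x :: v) + occ [:: c; d] v));
  last by move=> d _; rewrite occ_cons.
rewrite big_split pref_sum2 IH rev_cons !addnA; congr (_ + _).
have -> : (v != [::]) = (rev v != [::]) by rewrite -!size_eq0 size_rev.
case: (rev v) => [|z r] /=; rewrite prefix0s andbT ?andbF; first by rewrite eq_sym addn0.
by rewrite addnC.
Qed.

End Letters.

Section Key.
Variable A : finType.
Variable Psi : seq A -> seq A.
Hypothesis HS : symmetry Psi.
Notation s := (sig Psi).

Lemma occ_letter c v : occ [:: c] v = occ [:: s c] (Psi v).
Proof. by rewrite (Psi_occ HS) Psi1. Qed.

Lemma Psi_cons_ex n (v : seq A) : size v = n.+1 -> exists x0 w, v = x0 :: w /\ size w = n.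
Proof. by case: v => // x0 w [Hw]; exists x0, w. Qed.

Lemma hd_y c (Y : seq A) : hd_is c Y = 1 -> Y = c :: drop 1 Y.
Proof. by case: Y => //= z Y; case: (z =P c) => // ->; rewrite drop0. Qed.

Section Fw.
Hypothesis H2 : forall a b, Psi [:: a; b] = [:: s a; s b].

Lemma hd_transfer c v : hd_is c v = hd_is (s c) (Psi v).
Proof.
apply/eqP; rewrite -(eqn_add2r (\sum_(d : A) occ [:: d; c] v)) -occ1.
have -> : \sum_(d : A) occ [:: d; c] v = \sum_(e : A) occ [:: e; s c] (Psi v).
  rewrite [RHS](reindex_inj (sig_inj HS)) /=.
  by apply: eq_bigr => d _; rewrite (Psi_occ HS) H2.
by rewrite -occ1 occ_letter.
Qed.

Lemma key_fw v : Psi v = map s v.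
Proof.
case: v => [|x v]; first exact: (Psi_nil HS).
have : size (x :: v) = (size v).+1 by [].
move: (x :: v) (size v) => {x} v n; elim: n v => [|n IH] v Hv.
  by case: v Hv => [|a [|]] //= _; rewrite (Psi1 HS).
have [x0 [w [Ev Hw]]] := Psi_cons_ex Hv.
have Hy := pair_lemma HS Hv.
have sp : size (take n.+1 v) = n.+1 by rewrite size_take Hv ltnSn.
have ss : size (drop 1 v) = n.+1 by rewrite size_drop Hv subn1.
rewrite /= (IH _ sp) (IH _ ss) in Hy.
rewrite Ev in Hy *; apply: (core_lemma (sig_inj HS) Hw).
  by apply: hd_y; rewrite -hd_transfer /= eqxx.
by rewrite /= drop0 in Hy.
Qed.
End Fw.

Section Rv.
Hypothesis H2 : forall a b, Psi [:: a; b] = [:: s b; s a].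

Lemma hd_transfer_r c v : hd_is c v = hd_is (s c) (rev (Psi v)).
Proof.
apply/eqP; rewrite -(eqn_add2r (\sum_(d : A) occ [:: d; c] v)) -occ1.
have -> : \sum_(d : A) occ [:: d; c] v = \sum_(e : A) occ [:: s c; e] (Psi v).
  rewrite [RHS](reindex_inj (sig_inj HS)) /=.
  by apply: eq_bigr => d _; rewrite (Psi_occ HS) H2.
by rewrite -occ1r occ_letter.
Qed.

Lemma key_rv v : Psi v = rev (map s v).
Proof.
case: v => [|x v]; first exact: (Psi_nil HS).
have : size (x :: v) = (size v).+1 by [].
move: (x :: v) (size v) => {x} v n; elim: n v => [|n IH] v Hv.
  by case: v Hv => [|a [|]] //= _; rewrite (Psi1 HS).
have [x0 [w [Ev Hw]]] := Psi_cons_ex Hv.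
have Hy := pair_lemma HS Hv.
have sp : size (take n.+1 v) = n.+1 by rewrite size_take Hv ltnSn.
have ss : size (drop 1 v) = n.+1 by rewrite size_drop Hv subn1.
rewrite /= (IH _ sp) (IH _ ss) in Hy.
have Hsy : size (Psi v) = n.+2 by rewrite (size_Psi HS).
rewrite -[Psi v]revK; congr rev.
have Ed : drop 1 v = w by rewrite Ev /= drop0.
rewrite Ed in Hy.
rewrite [in RHS]Ev; apply: (core_lemma (sig_inj HS) Hw).
  by apply: hd_y; rewrite -hd_transfer_r Ev /= eqxx.
rewrite -Ev take_rev drop_rev Hsy.
have -> : n.+2 - n.+1 = 1 by rewrite subSS subSnn.
rewrite subn1 /=.
case: Hy => [[E1 E2]|[E1 E2]]; [right|left]; by rewrite E1 E2 !revK.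
Qed.
End Rv.
End Key.

Section Orient.
Variable A : finType.
Variable Psi : seq A -> seq A.
Hypothesis HS : symmetry Psi.
Notation s := (sig Psi).

Lemma two_cases a b : Psi [:: a; b] = [:: s a; s b] \/ Psi [:: a; b] = [:: s b; s a].
Proof.
have := size_Psi HS [:: a; b]; have := @pair_lemma _ _ HS 0 [:: a; b] erefl.
rewrite /= !(Psi1 HS).
case: (Psi [:: a; b]) => [|y0 [|y1 [|]]] //= [[[->] [->]]|[[->] [->]]] _; by [left|right].
Qed.

Definition ori a b := Psi [:: a; b] == [:: s a; s b].

Lemma triple x y z : x != y -> y != z -> ori x y = ori y z.
Proof.
move=> Hxy Hyz.
have := size_Psi HS [:: x; y; z]; have := @pair_lemma _ _ HS 1 [:: x; y; z] erefl.
rewrite /= /ori; case: (two_cases x y) => ->; case: (two_cases y z) => ->;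
case: (Psi [:: x; y; z]) => [|Y0 [|Y1 [|Y2 [|]]]] //= [[[E1 E2] [E3 E4]]|[[E1 E2] [E3 E4]]] _;
subst;
repeat match goal with H : s ?a = s ?b |- _ => apply (sig_inj HS) in H end; subst;
rewrite ?eqxx // in Hxy Hyz *.
by rewrite !eqseq_cons !(inj_eq (sig_inj HS)) (negbTE Hxy) (negbTE Hyz) !andbF.
Qed.
Lemma orient : (forall a b, Psi [:: a; b] = [:: s a; s b]) \/
  (forall a b, Psi [:: a; b] = [:: s b; s a]).
Proof.
case: (boolP [forall a, forall b, ori a b]) => [H|].
  by left=> a b; apply/eqP; move/forallP: H => /(_ a)/forallP/(_ b).
rewrite negb_forall => /existsP [a]; rewrite negb_forall => /existsP [b Hab].
right=> c d; case: (two_cases c d) => // E.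
case: (eqVneq c d) => [Ecd|Hcd]; first by rewrite E Ecd.
have Ha_b : a != b.
  apply/eqP => Eab; rewrite -Eab /ori in Hab.
  by case: (two_cases a a) => E'; rewrite E' eqxx in Hab.
have : ori c d = ori a b.
  case: (eqVneq b c) => [Ebc|Hbc].
    by rewrite -Ebc in Hcd *; rewrite (triple Ha_b Hcd).
  by rewrite (triple Ha_b Hbc) (triple Hbc Hcd).
by move=> Ho; move: Hab; rewrite -Ho /ori E eqxx.
Qed.
End Orient.

Theorem lemma15 (A : finType) (Psi : seq A -> seq A) :
  symmetry Psi -> morphism Psi \/ antimorphism Psi.
Proof.
move=> HS; case: (orient HS) => H2; [left|right] => v w.
  by rewrite !(key_fw HS H2) map_cat.
by rewrite !(key_rv HS H2) map_cat rev_cat.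
Qed.
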